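(* Each of the endofunctors $M\otimes-$ and $N\otimes-$ on $\mathsf{SquaMS}$ has an initial algebra, whose carrier is the colimit in $\mathsf{SquaMS}$ of the initial $\omega$-chain $M_0\to P\otimes M_0\to P^2\otimes M_0\to\cdots$ (for $P=M$, resp. $P=N$), where $M_0$ carries the path metric.
   Context: Let $M_0=\{(r,s)\in[0,1]^2: r\in\{0,1\}\text{ or } s\in\{0,1\}\}$. A square metric space is a pair $(X,S_X)$ with $X$ a metric space with all distances at most $2$ and $S_X\colon M_0\to X$ injective such that (sq1) for $i\in\{0,1\}$, $r,s\in[0,1]$: $d_X(S_X(i,r),S_X(i,s))=|s-r|$ and $d_X(S_X(r,i),S_X(s,i))=|s-r|$; (sq2) $d_X(S_X(r,s),S_X(t,u))\ge|r-t|+|s-u|$. $\mathsf{SquaMS}$: these objects, with short maps $f$ satisfying $f\circ S_X=S_Y$ as morphisms. The path metric on $M_0$ is the shortest-path (arc length) distance along the boundary; $(M_0,\mathrm{id})$ with it is a square metric space. Let $N=\{0,1,2\}^2$, $M=N\setminus\{(1,1)\}$, also viewed as points of $\mathbb{R}^2$. For $P\in\{M,N\}$ and $X$ in $\mathsf{SquaMS}$, $P\otimes X=(P\times X)/\!\sim$, where $\sim$ is generated by $(m,S_X(p))\sim(n,S_X(q))$ whenever $m,n\in P$ differ by exactly $1$ in exactly one coordinate and $(m+p)/3=(n+q)/3$ in $\mathbb{R}^2$; $m\otimes x$ is the class of $(m,x)$. With $d((a,u),(b,v))=\frac13 d_X(u,v)$ if $a=b$ and $2$ otherwise, $P\otimes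 X$ gets the quotient metric (infimum over finite chains of sums of consecutive distances, $\sim$-related consecutive pairs counting $0$). $S_{P\otimes X}(p)=m\otimes S_X(3p-m)$ for any $m\in P$ with $p\in(m+[0,1]^2)/3$; $(P\otimes f)(m\otimes x)=m\otimes f(x)$. $P^{k+1}\otimes X=P\otimes(P^k\otimes X)$. The initial chain maps are $!=S_{P\otimes M_0}\colon M_0\to P\otimes M_0$ and $P^k\otimes !$. An algebra for $F$ is $(A,a\colon FA\to A)$; an initial algebra is initial among algebras and algebra morphisms. *)

(* Defs.v *)
From Stdlib Require Import Reals Lra ClassicalEpsilon.
From Coquelicot Require Import Rbar Lub.
Open Scope R_scope.

Definition inM0 (r s : R) : Prop :=
  0 <= r <= 1 /\ 0 <= s <= 1 /\ (r = 0 \/ r = 1 \/ s = 0 \/ s = 1).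

Definition M0pt : Type := {p : R * R | inM0 (fst p) (snd p)}.

(* perimeter (arc-length) parameter in [0,4) *)
Definition perim (r s : R) : R :=
  if Req_EM_T s 0 then r
  else if Req_EM_T r 1 then 1 + s
  else if Req_EM_T s 1 then 3 - r
  else 4 - s.

Definition path_dist (p q : R * R) : R :=
  let t := Rabs (perim (fst p) (snd p) - perim (fst q) (snd q)) in Rmin t (4 - t).

(* ---------- Raw "pre-square" structures ----------
   A carrier, a distance function and the map S (total on R*R, only
   meaningful on the points of M0). *)
Record PreSq : Type := {
  car : Type;
  dist : car -> car -> R;
  Smap : R -> R -> car
}.

Definition is_metric (X : PreSq) : Prop :=
  (forall x y, 0 <= dist X x y) /\
  (forall x, dist X x x = 0) /\
  (forall x y, dist X x y = 0 -> x = y) /\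
  (forall x y, dist X x y = dist X y x) /\
  (forall x y z, dist X x z <= dist X x y + dist X y z).

Definition is_squams (X : PreSq) : Prop :=
  is_metric X /\
  (forall x y, dist X x y <= 2) /\
  (forall r s t u, inM0 r s -> inM0 t u -> Smap X r s = Smap X t u -> r = t /\ s = u) /\
  (forall (i r s : R), (i = 0 \/ i = 1) -> 0 <= r <= 1 -> 0 <= s <= 1 ->
      dist X (Smap X i r) (Smap X i s) = Rabs (s - r) /\
      dist X (Smap X r i) (Smap X s i) = Rabs (s - r)) /\
  (forall r s t u, inM0 r s -> inM0 t u ->
      Rabs (r - t) + Rabs (s - u) <= dist X (Smap X r s) (Smap X t u)).

Definition short (X Y : PreSq) (f : car X -> car Y) : Prop :=
  forall x y, dist Y (f x) (f y) <= dist X x y.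

Definition is_hom (X Y : PreSq) (f : car X -> car Y) : Prop :=
  short X Y f /\ (forall r s, inM0 r s -> f (Smap X r s) = Smap Y r s).

Definition M0_00 : inM0 0 0.
Proof. unfold inM0; repeat split; try lra; auto. Qed.

Definition M0S (r s : R) : M0pt :=
  match excluded_middle_informative (inM0 r s) with
  | left H => exist (fun p : R * R => inM0 (fst p) (snd p)) (r, s) H
  | right _ => exist (fun p : R * R => inM0 (fst p) (snd p)) (0, 0) M0_00
  end.

Definition M0obj : PreSq := {|
  car := M0pt;
  dist := fun p q => path_dist (proj1_sig p) (proj1_sig q);
  Smap := M0S
|}.

Record Shape : Type := {
  inP : nat * nat -> bool;
  inP00 : inP (0%nat, 0%nat) = true
}.

Definition inN (m : nat * nat) : bool :=
  (Nat.ltb (fst m) 3 && Nat.ltb (snd m) 3)%bool.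
Definition inM (m : nat * nat) : bool :=
  (inN m && negb (Nat.eqb (fst m) 1 && Nat.eqb (snd m) 1))%bool.

Definition shapeN : Shape := {| inP := inN; inP00 := eq_refl |}.
Definition shapeM : Shape := {| inP := inM; inP00 := eq_refl |}.

Definition Pt (P : Shape) : Type := {m : nat * nat | inP P m = true}.

Definition mkPt (P : Shape) (m : nat * nat) : Pt P :=
  match inP P m as b return inP P m = b -> Pt P with
  | true => fun H => exist _ m H
  | false => fun _ => exist _ (0%nat, 0%nat) (inP00 P)
  end eq_refl.

Definition cidx (r : R) : nat :=
  if Rlt_dec r (1/3) then 0%nat else if Rlt_dec r (2/3) then 1%nat else 2%nat.

Definition adjacent (m n : nat * nat) : Prop :=
  (fst m = fst n /\ (snd m = S (snd n) \/ snd n = S (snd m))) \/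
  (snd m = snd n /\ (fst m = S (fst n) \/ fst n = S (fst m))).

Section Tensor.
Variables (P : Shape) (X : PreSq).

Definition Tcar : Type := (Pt P * car X)%type.

Definition gen (u v : Tcar) : Prop :=
  let m := proj1_sig (fst u) in let n := proj1_sig (fst v) in
  exists p1 p2 q1 q2, inM0 p1 p2 /\ inM0 q1 q2 /\
    snd u = Smap X p1 p2 /\ snd v = Smap X q1 q2 /\ adjacent m n /\
    (INR (fst m) + p1) / 3 = (INR (fst n) + q1) / 3 /\
    (INR (snd m) + p2) / 3 = (INR (snd n) + q2) / 3.

Definition dpre (u v : Tcar) : R :=
  let m := proj1_sig (fst u) in let n := proj1_sig (fst v) in
  if (Nat.eqb (fst m) (fst n) && Nat.eqb (snd m) (snd n))%bool
  then dist X (snd u) (snd v) / 3 else 2.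

Definition step (u v : Tcar) (c : R) : Prop :=
  c = dpre u v \/ (c = 0 /\ (gen u v \/ gen v u)).

Inductive chainsum : Tcar -> Tcar -> R -> Prop :=
| chain1 u v c : step u v c -> chainsum u v c
| chainS u w v c1 c2 : step u w c1 -> chainsum w v c2 -> chainsum u v (c1 + c2).

Definition tdist (u v : Tcar) : R := real (Glb_Rbar (chainsum u v)).

Definition tS (r s : R) : Tcar :=
  let m := (cidx r, cidx s) in
  (mkPt P m, Smap X (3 * r - INR (fst m)) (3 * s - INR (snd m))).

Definition tensor : PreSq := {| car := Tcar; dist := tdist; Smap := tS |}.
End Tensor.

Definition tmap (P : Shape) (X Y : PreSq) (f : car X -> car Y)
  : car (tensor P X) -> car (tensor P Y) :=
  fun u => (fst u, f (snd u)).

Definition is_alg (P : Shape) (A : PreSq) (a : car (tensor P A) -> car A) : Prop :=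
  is_squams A /\ is_hom (tensor P A) A a.

Definition alg_hom (P : Shape) (A : PreSq) (a : car (tensor P A) -> car A)
  (B : PreSq) (b : car (tensor P B) -> car B) (h : car A -> car B) : Prop :=
  is_hom A B h /\ (forall u, h (a u) = b (tmap P A B h u)).

Definition initial_alg (P : Shape) (A : PreSq) (a : car (tensor P A) -> car A) : Prop :=
  is_alg P A a /\
  forall (B : PreSq) (b : car (tensor P B) -> car B), is_alg P B b ->
    exists h, alg_hom P A a B b h /\
      forall h', alg_hom P A a B b h' -> forall x, h' x = h x.

Fixpoint Ch (P : Shape) (k : nat) : PreSq :=
  match k with
  | O => M0obj
  | S k' => tensor P (Ch P k')
  end.

Definition bang (P : Shape) : car M0obj -> car (tensor P M0obj) :=
  fun x => Smap (tensor P M0obj) (fst (proj1_sig x)) (snd (proj1_sig x)).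

Fixpoint cmap (P : Shape) (k : nat) : car (Ch P k) -> car (Ch P (S k)) :=
  match k as k0 return car (Ch P k0) -> car (Ch P (S k0)) with
  | O => bang P
  | S k' => tmap P (Ch P k') (Ch P (S k')) (cmap P k')
  end.

Definition cocone (P : Shape) (B : PreSq) (g : forall k, car (Ch P k) -> car B) : Prop :=
  (forall k, is_hom (Ch P k) B (g k)) /\
  (forall k x, g (S k) (cmap P k x) = g k x).

Definition is_colimit (P : Shape) (A : PreSq) (g : forall k, car (Ch P k) -> car A) : Prop :=
  is_squams A /\ cocone P A g /\
  forall (B : PreSq) (h : forall k, car (Ch P k) -> car B),
    is_squams B -> cocone P B h ->
    exists u, is_hom A B u /\ (forall k x, u (g k x) = h k x) /\
      forall u', is_hom A B u' -> (forall k x, u' (g k x) = h k x) ->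
        forall y, u' y = u y.

(* Main.v *)
Require Import Defs.
From Stdlib Require Import Reals.
From Stdlib Require Import Reals Lra Lia ClassicalEpsilon FunctionalExtensionality PropExtensionality ProofIrrelevance Eqdep_dec Arith.
From Coquelicot Require Import Rbar Lub.
Require Import Defs.
Open Scope R_scope.


Lemma glb_fin (E : R -> Prop) c0 : E c0 -> (forall c, E c -> 0 <= c) ->
  is_glb_Rbar E (Finite (real (Glb_Rbar E))).
Proof.
  intros H0 Hlb. destruct (Glb_Rbar_correct E) as [Hl Hg].
  destruct (Glb_Rbar E) eqn:Ee; simpl.
  - split; auto.
  - exfalso. specialize (Hl c0 H0). simpl in Hl. auto.
  - exfalso. assert (Rbar_le (Finite 0) m_infty) by (apply Hg; intros x Hx; simpl; auto).
    simpl in H. auto.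
Qed.

Lemma glb_le (E : R -> Prop) c0 c : E c0 -> (forall c, E c -> 0 <= c) -> E c ->
  real (Glb_Rbar E) <= c.
Proof. intros H0 Hlb Hc. destruct (glb_fin E c0 H0 Hlb) as [Hl _]. exact (Hl c Hc). Qed.

Lemma glb_ge (E : R -> Prop) c0 b : E c0 -> (forall c, E c -> 0 <= c) ->
  (forall c, E c -> b <= c) -> b <= real (Glb_Rbar E).
Proof. intros H0 Hlb Hb. destruct (glb_fin E c0 H0 Hlb) as [_ Hg].
  exact (Hg (Finite b) Hb). Qed.

Lemma glb_nonneg (E : R -> Prop) c0 : E c0 -> (forall c, E c -> 0 <= c) ->
  0 <= real (Glb_Rbar E).
Proof. intros. apply (glb_ge E c0); auto. Qed.

Definition pmet (X : PreSq) : Prop :=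
  (forall x y, 0 <= dist X x y) /\ (forall x, dist X x x = 0) /\
  (forall x y, dist X x y = dist X y x) /\
  (forall x y z, dist X x z <= dist X x y + dist X y z).
Definition bnd2 (X : PreSq) : Prop := forall x y, dist X x y <= 2.
Definition sq2p (X : PreSq) : Prop := forall r s t u, inM0 r s -> inM0 t u ->
      Rabs (r - t) + Rabs (s - u) <= dist X (Smap X r s) (Smap X t u).
Definition sq1u (X : PreSq) : Prop := forall (i r s : R), (i = 0 \/ i = 1) -> 0 <= r <= 1 -> 0 <= s <= 1 ->
      dist X (Smap X i r) (Smap X i s) <= Rabs (s - r) /\
      dist X (Smap X r i) (Smap X s i) <= Rabs (s - r).

Lemma squams_pmet X : is_squams X -> pmet X.
Proof. intros [[a [b [c [d e]]]] _]. repeat split; auto. Qed.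
Lemma squams_sq2 X : is_squams X -> sq2p X.
Proof. intros [_ [_ [_ [_ e]]]]. exact e. Qed.
Lemma squams_sq1u X : is_squams X -> sq1u X.
Proof. intros [_ [_ [_ [e _]]]] i r s Hi Hr Hs. destruct (e i r s Hi Hr Hs). lra. Qed.

Ltac rabs := unfold Rabs, Rmin in *; repeat match goal with
  | |- context [Rcase_abs ?x] => destruct (Rcase_abs x)
  | H : context [Rcase_abs ?x] |- _ => destruct (Rcase_abs x)
  | |- context [Rle_dec ?x ?y] => destruct (Rle_dec x y)
  | H : context [Rle_dec ?x ?y] |- _ => destruct (Rle_dec x y)
  end.

Ltac dperim := unfold perim in *; repeat match goal with
  | |- context [Req_EM_T ?a ?b] => destruct (Req_EM_T a b)
  | H : context [Req_EM_T ?a ?b] |- _ => destruct (Req_EM_T a b)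
  end.

Lemma perim_range r s : inM0 r s -> 0 <= perim r s < 4.
Proof. intros [Hr [Hs _]]. dperim; lra. Qed.

Lemma M0S_val r s : inM0 r s -> proj1_sig (M0S r s) = (r, s).
Proof. intros H. unfold M0S. destruct (excluded_middle_informative (inM0 r s)); [reflexivity|tauto]. Qed.

Lemma M0S_eq (x : M0pt) : M0S (fst (proj1_sig x)) (snd (proj1_sig x)) = x.
Proof. destruct x as [[r s] H]. simpl. unfold M0S.
  destruct (excluded_middle_informative (inM0 r s)); [|tauto].
  f_equal. apply proof_irrelevance. Qed.

Lemma M0_pmet : pmet M0obj.
Proof.
  unfold pmet; simpl. unfold path_dist.
  repeat split.
  - intros [[a b] Ha] [[c d] Hc]; simpl in *.
    pose proof (perim_range _ _ Ha); pose proof (perim_range _ _ Hc). rabs; lra.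
  - intros [[a b] Ha]; simpl. rewrite Rminus_diag, Rabs_R0. rabs; lra.
  - intros [[a b] Ha] [[c d] Hc]; simpl. rewrite Rabs_minus_sym. reflexivity.
  - intros [[a b] Ha] [[c d] Hc] [[e f] He]; simpl in *.
    pose proof (perim_range _ _ Ha); pose proof (perim_range _ _ Hc);
    pose proof (perim_range _ _ He).
    set (x := perim a b) in *; set (y := perim c d) in *; set (z := perim e f) in *.
    clearbody x y z. rabs; lra.
Qed.

Lemma M0_bnd2 : bnd2 M0obj.
Proof. intros [[a b] Ha] [[c d] Hc]; simpl; unfold path_dist; simpl. rabs; lra. Qed.

Lemma M0_sq1u : sq1u M0obj.
Proof.
  intros i r s Hi Hr Hs. simpl.
  assert (inM0 i r) by (unfold inM0; lra).
  assert (inM0 i s) by (unfold inM0; lra).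
  assert (inM0 r i) by (unfold inM0; lra).
  assert (inM0 s i) by (unfold inM0; lra).
  rewrite !M0S_val by auto. unfold path_dist; simpl.
  destruct Hi; subst; split; dperim; rabs; lra.
Qed.

Lemma M0_sq2 : sq2p M0obj.
Proof.
  intros r s t u Hrs Htu. simpl. rewrite !M0S_val by auto. unfold path_dist; simpl.
  destruct Hrs as [Hr [Hs Hrs]]; destruct Htu as [Ht [Hu Htu]].
  destruct Hrs as [->|[->|[->| ->]]]; destruct Htu as [->|[->|[->| ->]]];
  dperim; rabs; lra.
Qed.


Definition goodP (P : Shape) : Prop := forall i j, (i < 3)%nat -> (j < 3)%nat ->
  (i = 0 \/ i = 2 \/ j = 0 \/ j = 2)%nat -> inP P (i,j) = true.

Lemma goodM : goodP shapeM.
Proof. intros i j Hi Hj H. simpl. unfold inM, inN; simpl.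
  destruct i as [|[|[|i]]]; destruct j as [|[|[|j]]]; simpl; try lia; reflexivity. Qed.
Lemma goodN : goodP shapeN.
Proof. intros i j Hi Hj H. simpl. unfold inN; simpl.
  destruct i as [|[|[|i]]]; destruct j as [|[|[|j]]]; simpl; try lia; reflexivity. Qed.

Lemma cidx_cases t : (cidx t = 0%nat /\ t < 1/3) \/ (cidx t = 1%nat /\ 1/3 <= t < 2/3)
  \/ (cidx t = 2%nat /\ 2/3 <= t).
Proof. unfold cidx. destruct (Rlt_dec t (1/3)); [left; auto|].
  destruct (Rlt_dec t (2/3)); [right; left; split; auto; lra| right; right; split; auto; lra]. Qed.

Lemma cidx_lt t : (cidx t < 3)%nat.
Proof. destruct (cidx_cases t) as [[-> _]|[[-> _]|[-> _]]]; lia. Qed.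

Lemma cidx_bnd t : 0 <= t <= 1 -> 0 <= 3*t - INR (cidx t) <= 1.
Proof. intros. destruct (cidx_cases t) as [[-> ?]|[[-> ?]|[-> ?]]]; simpl; lra. Qed.

Lemma cidx_0 : cidx 0 = 0%nat.
Proof. destruct (cidx_cases 0) as [[-> ?]|[[-> ?]|[-> ?]]]; auto; lra. Qed.
Lemma cidx_1 : cidx 1 = 2%nat.
Proof. destruct (cidx_cases 1) as [[-> ?]|[[-> ?]|[-> ?]]]; auto; lra. Qed.

Lemma M0_sub r s : inM0 r s -> inM0 (3*r - INR (cidx r)) (3*s - INR (cidx s)).
Proof. intros [Hr [Hs H]]. pose proof (cidx_bnd r Hr). pose proof (cidx_bnd s Hs).
  split; [lra|split;[lra|]].
  destruct H as [->|[->|[->| ->]]]; [rewrite cidx_0|rewrite cidx_1|rewrite cidx_0|rewrite cidx_1]; simpl; lra. Qed.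

Lemma M0_cell P r s : goodP P -> inM0 r s -> inP P (cidx r, cidx s) = true.
Proof. intros G [Hr [Hs H]]. apply G; try apply cidx_lt.
  destruct H as [->|[->|[->| ->]]]; [rewrite cidx_0|rewrite cidx_1|rewrite cidx_0|rewrite cidx_1]; auto. Qed.

Lemma mkPt_val P m : inP P m = true -> proj1_sig (mkPt P m) = m.
Proof. intros H. unfold mkPt. generalize (@eq_refl bool (inP P m)).
  generalize (inP P m) at 2 3. intros b e. destruct b; simpl; [reflexivity|congruence]. Qed.


Ltac upt := try (unfold Pt in *).
Ltac lra' := try (unfold Pt in *); lra.

Section T.
Variables (P : Shape) (X : PreSq) (HX : pmet X).

Lemma dpre_cases u v :
  (proj1_sig (fst u) = proj1_sig (fst v) /\ dpre P X u v = dist X (snd u) (snd v) / 3) \/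
  (proj1_sig (fst u) <> proj1_sig (fst v) /\ dpre P X u v = 2).
Proof.
  destruct u as [[[a b] Ha] x], v as [[[c d] Hc] y]; unfold dpre; simpl.
  destruct (Nat.eqb a c) eqn:E1; destruct (Nat.eqb b d) eqn:E2; simpl.
  - apply Nat.eqb_eq in E1, E2. subst. left; auto.
  - right. apply Nat.eqb_neq in E2. split; auto. congruence.
  - right. apply Nat.eqb_neq in E1. split; auto. congruence.
  - right. apply Nat.eqb_neq in E1. split; auto. congruence.
Qed.

Lemma dpre_nonneg u v : 0 <= dpre P X u v.
Proof. destruct HX as [H0 _]. destruct (dpre_cases u v) as [[_ ->]|[_ ->]];
  [specialize (H0 (snd u) (snd v)); unfold Pt in *; lra' | lra']. Qed.

Lemma dpre_sym u v : dpre P X u v = dpre P X v u.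
Proof. destruct HX as [_ [_ [Hs _]]].
  destruct (dpre_cases u v) as [[E1 ->]|[E1 ->]]; destruct (dpre_cases v u) as [[E2 ->]|[E2 ->]];
  try congruence. Qed.

Lemma step_nonneg u v c : step P X u v c -> 0 <= c.
Proof. intros [->|[-> _]]; [apply dpre_nonneg|lra']. Qed.

Lemma chain_nonneg u v c : chainsum P X u v c -> 0 <= c.
Proof. induction 1. eapply step_nonneg; eauto. pose proof (step_nonneg _ _ _ H). lra'. Qed.

Lemma chain_self u v : chainsum P X u v (dpre P X u v).
Proof. apply chain1. left; auto. Qed.

Lemma tdist_le u v c : chainsum P X u v c -> tdist P X u v <= c.
Proof. intros H. unfold tdist. apply (glb_le _ (dpre P X u v)); auto.
  apply chain_self. apply chain_nonneg. Qed.

Lemma tdist_ge u v b : (forall c, chainsum P X u v c -> b <= c) -> b <= tdist P X u v.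
Proof. intros H. unfold tdist. apply (glb_ge _ (dpre P X u v)); auto.
  apply chain_self. apply chain_nonneg. Qed.

Lemma tdist_nonneg u v : 0 <= tdist P X u v.
Proof. apply tdist_ge. apply chain_nonneg. Qed.

Lemma chain_app u w v c1 c2 : chainsum P X u w c1 -> chainsum P X w v c2 -> chainsum P X u v (c1 + c2).
Proof. intros H1; revert v c2; induction H1; intros.
  - eapply chainS; eauto.
  - rewrite Rplus_assoc. eapply chainS; eauto. Qed.

Lemma step_sym u v c : step P X u v c -> step P X v u c.
Proof. intros [->|[-> [H|H]]]. left; apply dpre_sym. right; auto. right; auto. Qed.

Lemma chain_rev u v c : chainsum P X u v c -> chainsum P X v u c.
Proof. induction 1. apply chain1, step_sym; auto.
  rewrite Rplus_comm. eapply chain_app; eauto. apply chain1, step_sym; auto. Qed.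

Lemma tdist_sym_le u v : tdist P X v u <= tdist P X u v.
Proof. apply tdist_ge. intros c Hc. apply tdist_le, chain_rev; auto. Qed.

Lemma tdist_tri u w v : tdist P X u v <= tdist P X u w + tdist P X w v.
Proof.
  assert (H1 : forall c1, chainsum P X u w c1 -> forall c2, chainsum P X w v c2 -> tdist P X u v <= c1 + c2).
  { intros. apply tdist_le. eapply chain_app; eauto. }
  assert (H2 : forall c2, chainsum P X w v c2 -> tdist P X u v - c2 <= tdist P X u w).
  { intros c2 Hc2. apply tdist_ge. intros c1 Hc1. specialize (H1 c1 Hc1 c2 Hc2). lra'. }
  assert (H3 : tdist P X u v - tdist P X u w <= tdist P X w v).
  { apply tdist_ge. intros c2 Hc2. specialize (H2 c2 Hc2). lra'. }
  lra'.
Qed.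

Lemma tdist_dpre u v : tdist P X u v <= dpre P X u v.
Proof. apply tdist_le, chain_self. Qed.

Lemma tdist_cell u v : proj1_sig (fst u) = proj1_sig (fst v) -> tdist P X u v <= dist X (snd u) (snd v) / 3.
Proof. intros E. pose proof (tdist_dpre u v).
  destruct (dpre_cases u v) as [[_ E2]|[E2 _]]; [lra'|congruence]. Qed.

Lemma tdist_gen u v : gen P X u v -> tdist P X u v = 0.
Proof. intros H. apply Rle_antisym; [|apply tdist_nonneg].
  apply tdist_le. apply chain1. right. auto. Qed.

Lemma tensor_pmet : pmet (tensor P X).
Proof. unfold pmet; simpl. split; [apply tdist_nonneg|]. split.
  - intros x. apply Rle_antisym; [|apply tdist_nonneg].
    destruct HX as [_ [H0 _]]. eapply Rle_trans. apply tdist_cell; auto. rewrite H0. lra'.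
  - split. intros; apply Rle_antisym; apply tdist_sym_le.
    intros; apply tdist_tri.
Qed.

Lemma tensor_bnd2 : bnd2 X -> bnd2 (tensor P X).
Proof. intros B x y; simpl. eapply Rle_trans. apply tdist_dpre.
  destruct (dpre_cases x y) as [[_ ->]|[_ ->]]; [specialize (B (snd x) (snd y)); lra'|lra']. Qed.

Lemma S_inj : sq2p X -> forall p1 p2 q1 q2, inM0 p1 p2 -> inM0 q1 q2 ->
  Smap X p1 p2 = Smap X q1 q2 -> p1 = q1 /\ p2 = q2.
Proof. intros H p1 p2 q1 q2 Hp Hq E. specialize (H _ _ _ _ Hp Hq). rewrite E in H.
  destruct HX as [_ [H0 _]]. rewrite H0 in H. rabs; lra'. Qed.

Lemma help1 (gb1 gb2 gp1 gp2 gv1 gv2 d c2 b1 p1 b2 p2 : R) :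
  gb1 - gp1 = (b1 - p1)/3 -> gb2 - gp2 = (b2-p2)/3 -> Rabs(b1-p1)+Rabs(b2-p2) <= d ->
  d/3 + Rabs(gp1 - gv1) + Rabs(gp2 - gv2) <= c2 -> Rabs(gb1 - gv1) + Rabs(gb2 - gv2) <= c2.
Proof. intros. rabs; lra'. Qed.

Lemma chain_sq2 : sq2p X -> forall w v c, chainsum P X w v c -> forall q1 q2, inM0 q1 q2 -> snd v = Smap X q1 q2 ->
  2 <= c \/ exists p1 p2, inM0 p1 p2 /\
    dist X (snd w) (Smap X p1 p2) / 3
    + Rabs ((INR (fst (proj1_sig (fst w))) + p1)/3 - (INR (fst (proj1_sig (fst v))) + q1)/3)
    + Rabs ((INR (snd (proj1_sig (fst w))) + p2)/3 - (INR (snd (proj1_sig (fst v))) + q2)/3) <= c.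
Proof.
  intros Hsq. pose proof HX as [Hn [H0 [Hs Ht]]].
  induction 1; intros q1 q2 Hq Hv.
  - destruct H as [Hc|[Hc [Hg|Hg]]].
    + destruct (dpre_cases u v) as [[E1 E2]|[E1 E2]].
      * right. exists q1, q2. split; auto. upt; rewrite E1, <- Hv, !Rminus_diag, Rabs_R0. lra'.
      * left. lra'.
    + right. destruct Hg as (p1 & p2 & q1' & q2' & Hp & Hq' & Hu & Hv' & Hadj & G1 & G2).
      rewrite Hv' in Hv. destruct (S_inj Hsq _ _ _ _ Hq' Hq Hv). subst q1' q2'.
      exists p1, p2. split; auto. rewrite Hu, H0, G1, G2, !Rminus_diag, Rabs_R0. lra'.
    + right. destruct Hg as (p1 & p2 & q1' & q2' & Hp & Hq' & Hv' & Hu & Hadj & G1 & G2).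
      rewrite Hv' in Hv. destruct (S_inj Hsq _ _ _ _ Hp Hq Hv). subst p1 p2.
      exists q1', q2'. split; auto. rewrite Hu, H0, <- G1, <- G2, !Rminus_diag, Rabs_R0. lra'.
  - specialize (IHchainsum q1 q2 Hq Hv). pose proof (step_nonneg _ _ _ H).
    pose proof (chain_nonneg _ _ _ H1).
    destruct IHchainsum as [Hge|(p1' & p2' & Hp' & Hb)]; [left; lra'|].
    destruct H as [Hc|[Hc [Hg|Hg]]].
    + destruct (dpre_cases u w) as [[E1 E2]|[E1 E2]].
      * right. exists p1', p2'. split; auto. upt; rewrite E1.
        specialize (Ht (snd u) (snd w) (Smap X p1' p2')). lra'.
      * left. lra'.
    + right. destruct Hg as (a1 & a2 & b1 & b2 & Ha & Hb' & Hu & Hw & Hadj & G1 & G2).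
      exists a1, a2. split; auto. rewrite Hu, H0. rewrite Hw in Hb.
      assert (Hd := Hsq _ _ _ _ Hb' Hp').
      rewrite Hc, Rplus_0_l.
      assert (0/3 = 0) as -> by lra'. rewrite Rplus_0_l. rewrite G1, G2.
      eapply help1; [| |exact Hd|exact Hb]; lra'.
    + right. destruct Hg as (b1 & b2 & a1 & a2 & Hb' & Ha & Hw & Hu & Hadj & G1 & G2).
      exists a1, a2. split; auto. rewrite Hu, H0. rewrite Hw in Hb.
      assert (Hd := Hsq _ _ _ _ Hb' Hp').
      rewrite Hc, Rplus_0_l.
      assert (0/3 = 0) as -> by lra'. rewrite Rplus_0_l. rewrite <- G1, <- G2.
      eapply help1; [| |exact Hd|exact Hb]; lra'.
Qed.

Lemma tS_cell r s : goodP P -> inM0 r s -> proj1_sig (fst (tS P X r s)) = (cidx r, cidx s).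
Proof. intros G H. unfold tS; simpl. apply mkPt_val. apply M0_cell; auto. Qed.

Lemma help2 r s t u ci cj ct cu p1 p2 d c :
  0 <= r <= 1 -> 0 <= s <= 1 -> 0 <= t <= 1 -> 0 <= u <= 1 ->
  (2 <= c \/ (d / 3 + Rabs ((ci + p1)/3 - (ct + (3*t - ct))/3) + Rabs ((cj + p2)/3 - (cu + (3*u - cu))/3) <= c
   /\ Rabs ((3*r - ci) - p1) + Rabs ((3*s - cj) - p2) <= d)) ->
  Rabs (r - t) + Rabs (s - u) <= c.
Proof. intros. rabs; lra'. Qed.

Lemma tensor_sq2 : goodP P -> sq2p X -> sq2p (tensor P X).
Proof.
  intros G Hsq r s t u Hrs Htu. simpl. apply tdist_ge. intros c Hc.
  destruct (chain_sq2 Hsq _ _ _ Hc (3*t - INR (cidx t)) (3*u - INR (cidx u)) (M0_sub _ _ Htu) eq_refl)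
    as [H2|(p1 & p2 & Hp & Hb)].
  - pose proof Hrs as [? [? _]]; pose proof Htu as [? [? _]].
    apply (help2 r s t u 0 0 0 0 0 0 0 c); auto.
  - rewrite !tS_cell in Hb by auto. simpl in Hb.
    pose proof Hrs as [? [? _]]; pose proof Htu as [? [? _]].
    eapply (help2 r s t u); auto. right. split. exact Hb.
    apply Hsq; auto. apply M0_sub; auto.
Qed.

End T.

Section TM.
Variables (P : Shape) (X Y : PreSq) (HX : pmet X) (HY : pmet Y) (f : car X -> car Y)
  (Hf : forall x y, dist Y (f x) (f y) <= dist X x y)
  (HfS : forall r s, inM0 r s -> f (Smap X r s) = Smap Y r s).

Lemma tmap_step u v c : step P X u v c -> exists c', c' <= c /\ step P Y (tmap P X Y f u) (tmap P X Y f v) c'.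
Proof.
  intros [->|[-> [Hg|Hg]]].
  - exists (dpre P Y (tmap P X Y f u) (tmap P X Y f v)). split; [|left; auto].
    destruct (dpre_cases P X u v) as [[E1 ->]|[E1 ->]];
    destruct (dpre_cases P Y (tmap P X Y f u) (tmap P X Y f v)) as [[E2 ->]|[E2 ->]];
    simpl in *; try (exfalso; apply E2; assumption); try (exfalso; apply E1; assumption); try lra'.
    specialize (Hf (snd u) (snd v)). lra'.
  - exists 0. split; [lra|]. unfold step. right. split; auto. left.
    destruct Hg as (p1 & p2 & q1 & q2 & Hp & Hq & Hu & Hv & Hadj & G1 & G2).
    exists p1, p2, q1, q2. simpl. rewrite Hu, Hv, !HfS by auto. split; [exact Hp|split; [exact Hq|split; [reflexivity|split; [reflexivity|split; [exact Hadj|split; [exact G1|exact G2]]]]]].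
  - exists 0. split; [lra|]. unfold step. right. split; auto. right.
    destruct Hg as (p1 & p2 & q1 & q2 & Hp & Hq & Hu & Hv & Hadj & G1 & G2).
    exists p1, p2, q1, q2. simpl. rewrite Hu, Hv, !HfS by auto. split; [exact Hp|split; [exact Hq|split; [reflexivity|split; [reflexivity|split; [exact Hadj|split; [exact G1|exact G2]]]]]].
Qed.

Lemma tmap_chain u v c : chainsum P X u v c -> exists c', c' <= c /\ chainsum P Y (tmap P X Y f u) (tmap P X Y f v) c'.
Proof.
  induction 1.
  - destruct (tmap_step _ _ _ H) as (c' & H1 & H2). exists c'. split; auto. apply chain1; auto.
  - destruct (tmap_step _ _ _ H) as (c' & H1 & H2). destruct IHchainsum as (c'' & H3 & H4).
    exists (c' + c''). split; [lra|]. eapply chainS; eauto.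
Qed.

Lemma tmap_short u v : tdist P Y (tmap P X Y f u) (tmap P X Y f v) <= tdist P X u v.
Proof.
  apply tdist_ge; auto. intros c Hc. destruct (tmap_chain _ _ _ Hc) as (c' & H1 & H2).
  eapply Rle_trans; [|exact H1]. apply tdist_le; auto.
Qed.
End TM.


Lemma seg_gen (d : R -> R -> R) : (forall a b c, d a c <= d a b + d b c) ->
  (forall j a b, (j < 3)%nat -> INR j / 3 <= a <= b -> b <= (INR j + 1) / 3 -> d a b <= b - a) ->
  forall a b, 0 <= a <= b -> b <= 1 -> d a b <= b - a.
Proof.
  intros T W a b Hab Hb.
  assert (W0 := W 0%nat); assert (W1 := W 1%nat); assert (W2 := W 2%nat). simpl in W0, W1, W2.
  destruct (Rle_dec a (1/3)); destruct (Rle_dec b (1/3)); destruct (Rle_dec a (2/3)); destruct (Rle_dec b (2/3)).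
  all: try (apply W0; [lia|lra|lra]).
  all: try (apply W1; [lia|lra|lra]).
  all: try (apply W2; [lia|lra|lra]).
  all: try lra.
  - pose proof (T a (1/3) b). pose proof (W0 a (1/3) ltac:(lia) ltac:(lra) ltac:(lra)).
    pose proof (W1 (1/3) b ltac:(lia) ltac:(lra) ltac:(lra)). lra.
  - pose proof (T a (1/3) b). pose proof (T (1/3) (2/3) b). pose proof (W0 a (1/3) ltac:(lia) ltac:(lra) ltac:(lra)).
    pose proof (W1 (1/3) (2/3) ltac:(lia) ltac:(lra) ltac:(lra)).
    pose proof (W2 (2/3) b ltac:(lia) ltac:(lra) ltac:(lra)). lra.
  - pose proof (T a (2/3) b). pose proof (W1 a (2/3) ltac:(lia) ltac:(lra) ltac:(lra)).
    pose proof (W2 (2/3) b ltac:(lia) ltac:(lra) ltac:(lra)). lra.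
Qed.

Lemma seg_line (P : Shape) (X : PreSq) (HX : pmet X) (A : R -> Tcar P X) (E : nat -> R -> Tcar P X) :
  (forall j t, (j < 3)%nat -> INR j / 3 <= t <= (INR j + 1) / 3 -> tdist P X (A t) (E j t) = 0) ->
  (forall j a b, (j < 3)%nat -> INR j / 3 <= a <= b -> b <= (INR j + 1) / 3 -> tdist P X (E j a) (E j b) <= b - a) ->
  forall r s, 0 <= r <= 1 -> 0 <= s <= 1 -> tdist P X (A r) (A s) <= Rabs (s - r).
Proof.
  intros HA HB.
  assert (K : forall a b, 0 <= a <= b -> b <= 1 -> tdist P X (A a) (A b) <= b - a).
  { apply seg_gen. intros; apply tdist_tri; auto.
    intros j a b Hj Ha Hb.
    pose proof (tdist_tri P X HX (A a) (E j a) (A b)).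
    pose proof (tdist_tri P X HX (E j a) (E j b) (A b)).
    pose proof (tdist_sym_le P X HX (A b) (E j b)).
    pose proof (tdist_nonneg P X HX (E j b) (A b)).
    rewrite HA in * by (auto; lra). pose proof (HB j a b Hj Ha Hb). lra. }
  intros r s Hr Hs. destruct (Rle_dec r s).
  - rewrite Rabs_right by lra. apply K; lra.
  - rewrite Rabs_left1 by lra. pose proof (tdist_sym_le P X HX (A s) (A r)). pose proof (K s r ltac:(lra) ltac:(lra)). lra.
Qed.

Lemma cidx_sub j t : (j < 3)%nat -> INR j / 3 <= t <= (INR j + 1) / 3 -> t <= 1 ->
  cidx t = j \/ (cidx t = S j /\ t = (INR j + 1) / 3 /\ (j < 2)%nat).
Proof.
  intros Hj Ht Ht1. destruct j as [|[|[|j]]]; try lia; simpl in Ht;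
  destruct (cidx_cases t) as [[-> ?]|[[-> ?]|[-> ?]]]; auto; try lra.
  - right. repeat split; auto. simpl. lra.
  - right. repeat split; auto. simpl. lra.
Qed.

Lemma inM0_edge c x : (c = 0 \/ c = 1) -> 0 <= x <= 1 -> inM0 c x /\ inM0 x c.
Proof. intros [->| ->] H; unfold inM0; repeat split; lra. Qed.

Lemma ci_facts i : (i = 0 \/ i = 1) -> (cidx i = 0 \/ cidx i = 2)%nat /\ (cidx i < 3)%nat /\
  (3 * i - INR (cidx i) = 0 \/ 3 * i - INR (cidx i) = 1).
Proof. intros [->| ->]; [rewrite cidx_0|rewrite cidx_1]; simpl; repeat split; auto; lra. Qed.

Lemma tensor_sq1u (P : Shape) (X : PreSq) : pmet X -> goodP P -> sq1u X -> sq1u (tensor P X).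
Proof.
  intros HX G H1 i r s Hi Hr Hs. destruct (ci_facts i Hi) as (Hci & Hci3 & Hc).
  set (ci := cidx i) in *. set (c := 3 * i - INR ci) in *.
  split; simpl.
  - apply (seg_line P X HX (fun t => tS P X i t)
      (fun j t => (mkPt P (ci, j), Smap X c (3 * t - INR j)))); auto.
    + intros j t Hj Ht.
      assert (t <= 1) by (destruct j as [|[|[|j]]]; simpl in Ht; try lia; lra).
      destruct (cidx_sub j t Hj Ht H) as [E|(E & Et & Hj2)].
      * unfold tS; simpl. fold ci. rewrite E. fold c.
        destruct (tensor_pmet P X HX) as [_ [Z _]]. apply Z.
      * apply tdist_gen; auto. unfold tS. fold ci. rewrite E.
        exists c, (3 * t - INR (S j)), c, (3 * t - INR j). cbv beta zeta. cbn [fst snd]. rewrite ?S_INR.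
        rewrite !mkPt_val by (apply G; lia).
        assert (INR (S j) = INR j + 1) by (rewrite S_INR; auto).
        split; [apply (fun H => proj1 (inM0_edge c _ Hc H)); lra|]. split; [apply (fun H => proj1 (inM0_edge c _ Hc H)); lra|].
        split; [reflexivity|]. split; [reflexivity|].
        split; [left; simpl; auto|]. cbn [fst snd]. rewrite ?S_INR. split; lra.
    + intros j a b Hj Ha Hb. eapply Rle_trans. apply tdist_cell; auto. simpl.
      assert (Hx : 0 <= 3 * a - INR j <= 1) by lra. assert (Hy : 0 <= 3 * b - INR j <= 1) by lra.
      destruct (H1 c _ _ Hc Hx Hy) as [K _]. rewrite Rabs_right in K by lra. lra.
  - apply (seg_line P X HX (fun t => tS P X t i)
      (fun j t => (mkPt P (j, ci), Smap X (3 * t - INR j) c))); auto.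
    + intros j t Hj Ht.
      assert (t <= 1) by (destruct j as [|[|[|j]]]; simpl in Ht; try lia; lra).
      destruct (cidx_sub j t Hj Ht H) as [E|(E & Et & Hj2)].
      * unfold tS; simpl. fold ci. rewrite E. fold c.
        destruct (tensor_pmet P X HX) as [_ [Z _]]. apply Z.
      * apply tdist_gen; auto. unfold tS. fold ci. rewrite E.
        exists (3 * t - INR (S j)), c, (3 * t - INR j), c. cbv beta zeta. cbn [fst snd]. rewrite ?S_INR.
        rewrite !mkPt_val by (apply G; lia).
        assert (INR (S j) = INR j + 1) by (rewrite S_INR; auto).
        split; [apply (fun H => proj2 (inM0_edge c _ Hc H)); lra|]. split; [apply (fun H => proj2 (inM0_edge c _ Hc H)); lra|].
        split; [reflexivity|]. split; [reflexivity|].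
        split; [right; simpl; auto|]. cbn [fst snd]. rewrite ?S_INR. split; lra.
    + intros j a b Hj Ha Hb. eapply Rle_trans. apply tdist_cell; auto. simpl.
      assert (Hx : 0 <= 3 * a - INR j <= 1) by lra. assert (Hy : 0 <= 3 * b - INR j <= 1) by lra.
      destruct (H1 c _ _ Hc Hx Hy) as [_ K]. rewrite Rabs_right in K by lra. lra.
Qed.


Definition gx t := if Rle_dec t 1 then t else if Rle_dec t 2 then 1 else if Rle_dec t 3 then 3 - t else 0.
Definition gy t := if Rle_dec t 1 then 0 else if Rle_dec t 2 then t - 1 else if Rle_dec t 3 then 1 else 4 - t.

Ltac dg := unfold gx, gy in *; repeat match goal with
  | |- context [Rle_dec ?a ?b] => destruct (Rle_dec a b) end.

Lemma g_e0 t : 0 <= t <= 1 -> gx t = t /\ gy t = 0.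
Proof. intros; dg; split; lra. Qed.
Lemma g_e1 t : 1 <= t <= 2 -> gx t = 1 /\ gy t = t - 1.
Proof. intros; dg; split; lra. Qed.
Lemma g_e2 t : 2 <= t <= 3 -> gx t = 3 - t /\ gy t = 1.
Proof. intros; dg; split; lra. Qed.
Lemma g_e3 t : 3 <= t <= 4 -> gx t = 0 /\ gy t = 4 - t.
Proof. intros; dg; split; lra. Qed.

Lemma g_perim r s : inM0 r s -> gx (perim r s) = r /\ gy (perim r s) = s.
Proof. intros [Hr [Hs H]].
  destruct H as [->|[->|[->| ->]]]; dperim; dg; split; lra. Qed.

Lemma seg4 (d : R -> R -> R) : (forall a b c, d a c <= d a b + d b c) ->
  (forall k a b, (k < 4)%nat -> INR k <= a <= b -> b <= INR k + 1 -> d a b <= b - a) ->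
  forall a b, 0 <= a <= b -> b <= 4 -> d a b <= b - a.
Proof.
  intros T W.
  assert (K : forall n, (n <= 4)%nat -> forall a b, 0 <= a <= b -> b <= INR n -> d a b <= b - a).
  { induction n; intros Hn a b Hab Hb.
    - simpl in Hb. apply (W 0%nat); simpl; try lia; lra.
    - rewrite S_INR in Hb. destruct (Rle_dec b (INR n)).
      + apply IHn; auto; lia.
      + destruct (Rle_dec (INR n) a).
        * apply (W n); auto; try lia; lra.
        * pose proof (T a (INR n) b). pose proof (pos_INR n).
          pose proof (IHn ltac:(lia) a (INR n) ltac:(lra) ltac:(lra)).
          pose proof (W n (INR n) b ltac:(lia) ltac:(lra) ltac:(lra)). lra. }
  intros a b Hab Hb. apply (K 4%nat); auto. simpl. lra.
Qed.

Section PS.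
Variables (X : PreSq) (HX : pmet X) (H1 : sq1u X).
Definition Sg t := Smap X (gx t) (gy t).

Lemma arc : forall a b, 0 <= a <= b -> b <= 4 -> dist X (Sg a) (Sg b) <= b - a.
Proof.
  destruct HX as [_ [_ [_ T]]].
  apply (seg4 (fun a b => dist X (Sg a) (Sg b))). intros; apply T.
  intros k a b Hk Ha Hb. unfold Sg.
  destruct k as [|[|[|[|k]]]]; try lia; simpl in Ha, Hb.
  - destruct (g_e0 a) as [-> ->]; [lra|]. destruct (g_e0 b) as [-> ->]; [lra|].
    destruct (H1 0 a b) as [_ K]; try lra. rewrite Rabs_right in K; lra.
  - destruct (g_e1 a) as [-> ->]; [lra|]. destruct (g_e1 b) as [-> ->]; [lra|].
    destruct (H1 1 (a-1) (b-1)) as [K _]; try lra. rewrite Rabs_right in K; lra.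
  - destruct (g_e2 a) as [-> ->]; [lra|]. destruct (g_e2 b) as [-> ->]; [lra|].
    destruct (H1 1 (3-a) (3-b)) as [_ K]; try lra. rewrite Rabs_left1 in K; lra.
  - destruct (g_e3 a) as [-> ->]; [lra|]. destruct (g_e3 b) as [-> ->]; [lra|].
    destruct (H1 0 (4-a) (4-b)) as [K _]; try lra. rewrite Rabs_left1 in K; lra.
Qed.

Lemma Sg04 : Sg 4 = Sg 0.
Proof. unfold Sg. destruct (g_e3 4) as [-> ->]; [lra|]. destruct (g_e0 0) as [-> ->]; [lra|].
  f_equal. ring. Qed.

Lemma arc2 : forall a b, 0 <= a <= b -> b <= 4 -> dist X (Sg a) (Sg b) <= 4 - (b - a).
Proof.
  destruct HX as [_ [_ [S T]]]. intros a b Hab Hb.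
  pose proof (T (Sg a) (Sg 0) (Sg b)).
  pose proof (arc 0 a ltac:(lra) ltac:(lra)). rewrite S in H0.
  pose proof (arc b 4 ltac:(lra) ltac:(lra)). rewrite Sg04, S in H2. lra.
Qed.

Lemma path_short r s t u : inM0 r s -> inM0 t u ->
  dist X (Smap X r s) (Smap X t u) <= path_dist (r, s) (t, u).
Proof.
  intros Hrs Htu. destruct HX as [_ [_ [S T]]].
  destruct (g_perim r s Hrs) as [E1 E2]. destruct (g_perim t u Htu) as [E3 E4].
  pose proof (perim_range r s Hrs). pose proof (perim_range t u Htu).
  replace (Smap X r s) with (Sg (perim r s)) by (unfold Sg; rewrite E1, E2; auto).
  replace (Smap X t u) with (Sg (perim t u)) by (unfold Sg; rewrite E3, E4; auto).
  unfold path_dist; simpl. set (a := perim r s) in *; set (b := perim t u) in *.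
  apply Rmin_glb.
  - destruct (Rle_dec a b).
    + rewrite Rabs_left1 by lra. pose proof (arc a b ltac:(lra) ltac:(lra)). lra.
    + rewrite Rabs_right by lra. rewrite S. pose proof (arc b a ltac:(lra) ltac:(lra)). lra.
  - destruct (Rle_dec a b).
    + rewrite Rabs_left1 by lra. pose proof (arc2 a b ltac:(lra) ltac:(lra)). lra.
    + rewrite Rabs_right by lra. rewrite S. pose proof (arc2 b a ltac:(lra) ltac:(lra)). lra.
Qed.
End PS.


Lemma sig_ext {A : Type} {Q : A -> Prop} (x y : sig Q) : proj1_sig x = proj1_sig y -> x = y.
Proof. destruct x, y; simpl; intros; subst; f_equal; apply proof_irrelevance. Qed.

Lemma glb_le' (E : R -> Prop) c : (exists c0, E c0) -> (forall c, E c -> 0 <= c) -> E c ->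
  real (Glb_Rbar E) <= c.
Proof. intros [c0 H0] H1 H2. eapply glb_le; eauto. Qed.
Lemma glb_ge' (E : R -> Prop) b : (exists c0, E c0) -> (forall c, E c -> 0 <= c) ->
  (forall c, E c -> b <= c) -> b <= real (Glb_Rbar E).
Proof. intros [c0 H0] H1 H2. eapply glb_ge; eauto. Qed.

Section Col.
Variables (P : Shape) (G : goodP P).

Lemma stage_props n : pmet (Ch P n) /\ bnd2 (Ch P n) /\ sq2p (Ch P n).
Proof.
  induction n as [|n [A [B C]]].
  - split; [apply M0_pmet|split; [apply M0_bnd2|apply M0_sq2]].
  - simpl. split; [apply tensor_pmet; auto|split; [apply tensor_bnd2; auto|apply tensor_sq2; auto]].
Qed.

Lemma stage_pmet n : pmet (Ch P n). Proof. apply stage_props. Qed.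

Lemma stage1_sq1u : sq1u (Ch P 1).
Proof. simpl. apply tensor_sq1u; auto. apply M0_pmet. apply M0_sq1u. Qed.

Lemma tS_tmap (X Y : PreSq) (f : car X -> car Y) r s :
  (forall r s, inM0 r s -> f (Smap X r s) = Smap Y r s) -> inM0 r s ->
  tmap P X Y f (tS P X r s) = tS P Y r s.
Proof. intros Hf H. unfold tmap, tS; simpl. rewrite Hf; auto. apply M0_sub; auto. Qed.

Lemma cmap_props n :
  (forall x y, dist (Ch P (S n)) (cmap P n x) (cmap P n y) <= dist (Ch P n) x y) /\
  (forall r s, inM0 r s -> cmap P n (Smap (Ch P n) r s) = Smap (Ch P (S n)) r s).
Proof.
  induction n as [|n [IH1 IH2]].
  - split.
    + intros [[r s] Hx] [[t u] Hy]. simpl. unfold bang. simpl.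
      apply (path_short (Ch P 1)); auto. apply stage_pmet. apply stage1_sq1u.
    + intros r s H. simpl. unfold bang. rewrite M0S_val; auto.
  - split.
    + intros x y. exact (tmap_short P (Ch P n) (Ch P (S n)) (stage_pmet n) (stage_pmet (S n)) (cmap P n) IH1 IH2 x y).
    + intros r s H. simpl. apply tS_tmap; auto.
Qed.

Definition Seq := forall n, car (Ch P n).
Definition coh (f : Seq) k := forall n, (k <= n)%nat -> f (S n) = cmap P n (f n).
Definition U := {f : Seq | exists k, coh f k}.

Lemma coh_mono f k k' : coh f k -> (k <= k')%nat -> coh f k'.
Proof. intros H Hk n Hn. apply H. lia. Qed.

Lemma mono (f g : Seq) n m : coh f n -> coh g n -> (n <= m)%nat ->
  dist (Ch P m) (f m) (g m) <= dist (Ch P n) (f n) (g n).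
Proof.
  intros Hf Hg Hnm. destruct (Nat.le_exists_sub n m Hnm) as [j [-> _]].
  induction j.
  - simpl. lra.
  - simpl. rewrite Hf, Hg by lia. eapply Rle_trans. apply (proj1 (cmap_props (j + n))).
    apply IHj. lia.
Qed.

Definition DS (f g : U) (c : R) : Prop := exists n, coh (proj1_sig f) n /\ coh (proj1_sig g) n /\
  c = dist (Ch P n) (proj1_sig f n) (proj1_sig g n).
Definition D (f g : U) : R := real (Glb_Rbar (DS f g)).

Lemma DS_ne f g : exists c, DS f g c.
Proof. destruct f as [f [k Hk]], g as [g [k' Hk']].
  exists (dist (Ch P (max k k')) (f (max k k')) (g (max k k'))). exists (max k k'). simpl.
  split; [eapply coh_mono; eauto; lia|split; [eapply coh_mono; eauto; lia|auto]]. Qed.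

Lemma DS_nonneg f g c : DS f g c -> 0 <= c.
Proof. intros (n & _ & _ & ->). apply stage_pmet. Qed.

Lemma D_le f g c : DS f g c -> D f g <= c.
Proof. intros H. apply glb_le'; auto. apply DS_ne. apply DS_nonneg. Qed.
Lemma D_ge f g b : (forall c, DS f g c -> b <= c) -> b <= D f g.
Proof. intros H. apply glb_ge'; auto. apply DS_ne. apply DS_nonneg. Qed.
Lemma D_nonneg f g : 0 <= D f g.
Proof. apply D_ge, DS_nonneg. Qed.

Lemma D_lvl (f g : U) n : coh (proj1_sig f) n -> coh (proj1_sig g) n ->
  D f g <= dist (Ch P n) (proj1_sig f n) (proj1_sig g n).
Proof. intros. apply D_le. exists n; auto. Qed.

Lemma D_self f : D f f = 0.
Proof. apply Rle_antisym; [|apply D_nonneg]. destruct f as [f0 [k Hk]].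
  eapply Rle_trans. apply (D_lvl _ _ k); simpl; auto.
  simpl. destruct (stage_pmet k) as [_ [Z _]]. rewrite Z. lra. Qed.

Lemma D_sym_le f g : D g f <= D f g.
Proof. apply D_ge. intros c (n & H1 & H2 & ->). eapply Rle_trans. apply (D_lvl _ _ n); auto.
  destruct (stage_pmet n) as [_ [_ [S _]]]. rewrite S. lra. Qed.
Lemma D_sym f g : D f g = D g f.
Proof. apply Rle_antisym; apply D_sym_le. Qed.

Lemma D_tri f g h : D f h <= D f g + D g h.
Proof.
  assert (H1 : forall c1, DS f g c1 -> forall c2, DS g h c2 -> D f h <= c1 + c2).
  { intros c1 (n1 & A1 & B1 & ->) c2 (n2 & A2 & B2 & ->).
    set (N := max n1 n2).
    eapply Rle_trans. apply (D_lvl _ _ N); eapply coh_mono; eauto; lia.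
    destruct (stage_pmet N) as [_ [_ [_ T]]].
    eapply Rle_trans. apply (T _ (proj1_sig g N)).
    pose proof (mono _ _ n1 N A1 B1 ltac:(lia)). pose proof (mono _ _ n2 N A2 B2 ltac:(lia)). lra. }
  assert (H2 : forall c2, DS g h c2 -> D f h - c2 <= D f g).
  { intros c2 Hc2. apply D_ge. intros c1 Hc1. specialize (H1 c1 Hc1 c2 Hc2). lra. }
  assert (H3 : D f h - D f g <= D g h).
  { apply D_ge. intros c2 Hc2. specialize (H2 c2 Hc2). lra. }
  lra.
Qed.

Lemma D_le2 f g : D f g <= 2.
Proof. destruct (DS_ne f g) as [c Hc]. pose proof (D_le _ _ _ Hc).
  destruct Hc as (n & _ & _ & ->). destruct (stage_props n) as [_ [B _]]. specialize (B (proj1_sig f n) (proj1_sig g n)). lra. Qed.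

Definition Qc := {E : U -> Prop | exists f, E = (fun g => D f g = 0)}.
Definition cl (f : U) : Qc := exist _ (fun g => D f g = 0) (ex_intro _ f eq_refl).
Definition rep (E : Qc) : U := proj1_sig (constructive_indefinite_description _ (proj2_sig E)).
Lemma rep_spec E : proj1_sig E = (fun g => D (rep E) g = 0).
Proof. unfold rep. destruct (constructive_indefinite_description _ _). auto. Qed.

Lemma cl_rep E : cl (rep E) = E.
Proof. apply sig_ext. simpl. rewrite rep_spec. auto. Qed.

Lemma cl_eq f f' : D f f' = 0 -> cl f = cl f'.
Proof. intros H. apply sig_ext; simpl. apply functional_extensionality. intros g.
  apply propositional_extensionality. split; intros H'.
  - pose proof (D_tri f' f g). rewrite D_sym in H. pose proof (D_nonneg f' g). lra.
  - pose proof (D_tri f f' g). pose proof (D_nonneg f g). lra. Qed.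

Lemma cl_inj f f' : cl f = cl f' -> D f f' = 0.
Proof. intros H. apply (f_equal (@proj1_sig _ _)) in H. simpl in H.
  apply (f_equal (fun F => F f')) in H. rewrite H. apply D_self. Qed.

Lemma rep_cl f : D (rep (cl f)) f = 0.
Proof. apply cl_inj. apply cl_rep. Qed.

Definition dC (E E' : Qc) : R := D (rep E) (rep E').

Lemma dC_cl f g : dC (cl f) (cl g) = D f g.
Proof. unfold dC. set (A := rep (cl f)). set (B := rep (cl g)).
  assert (HA : D A f = 0) by apply rep_cl. assert (HB : D B g = 0) by apply rep_cl.
  assert (HA' : D f A = 0) by (rewrite D_sym; auto). assert (HB' : D g B = 0) by (rewrite D_sym; auto).
  pose proof (D_tri A f B). pose proof (D_tri f g B).
  pose proof (D_tri f A g). pose proof (D_tri A B g). lra. Qed.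

Fixpoint sq (k : nat) (x : car (Ch P k)) (n : nat) {struct n} : car (Ch P n) :=
  match Nat.eq_dec k n with
  | left e => eq_rect k (fun i => car (Ch P i)) x n e
  | right _ => match n return car (Ch P n) with
               | O => Smap (Ch P 0) 0 0
               | S n' => cmap P n' (sq k x n')
               end
  end.

Lemma sq_k k x : sq k x k = x.
Proof. destruct k; simpl; try reflexivity; (match goal with |- context [Nat.eq_dec ?a ?b] => destruct (Nat.eq_dec a b) as [e|n] end);
  try congruence; rewrite (UIP_dec Nat.eq_dec e eq_refl); reflexivity. Qed.

Lemma sq_S k x n : (k <= n)%nat -> sq k x (S n) = cmap P n (sq k x n).
Proof. intros H. simpl. destruct (Nat.eq_dec k (S n)); [lia|reflexivity]. Qed.

Lemma sq_coh k x : coh (sq k x) k.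
Proof. intros n Hn. apply sq_S; auto. Qed.

Definition usq k x : U := exist _ (sq k x) (ex_intro _ k (sq_coh k x)).

Lemma sq_M0 r s n : inM0 r s -> sq 0 (M0S r s) n = Smap (Ch P n) r s.
Proof. intros H. induction n.
  - rewrite sq_k. reflexivity.
  - rewrite sq_S by lia. rewrite IHn. apply cmap_props; auto. Qed.

Definition SC (r s : R) : Qc := cl (usq 0 (M0S r s)).

Definition C : PreSq := {| car := Qc; dist := dC; Smap := SC |}.

Lemma C_sq2 : sq2p C.
Proof. intros r s t u H1 H2. simpl. unfold SC. rewrite dC_cl. apply D_ge.
  intros c (n & _ & _ & ->). simpl. rewrite !sq_M0 by auto. apply stage_props; auto. Qed.

Lemma C_squams : is_squams C.
Proof.
  split; [|split; [|split; [|split]]].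
  - split; [|split; [|split; [|split]]]; simpl.
    + intros; apply D_nonneg.
    + intros; apply D_self.
    + intros E E' H. rewrite <- (cl_rep E), <- (cl_rep E'). apply cl_eq. exact H.
    + intros; apply D_sym.
    + intros; apply D_tri.
  - intros; apply D_le2.
  - intros r s t u H1 H2 E. pose proof (C_sq2 r s t u H1 H2). rewrite E in H.
    simpl in H. unfold dC in H. rewrite D_self in H. rabs; split; lra.
  - intros i r s Hi Hr Hs.
    assert (inM0 i r) by (unfold inM0; lra). assert (inM0 i s) by (unfold inM0; lra).
    assert (inM0 r i) by (unfold inM0; lra). assert (inM0 s i) by (unfold inM0; lra).
    pose proof (C_sq2 i r i s H H0). pose proof (C_sq2 r i s i H1 H2).
    rewrite Rminus_diag, Rabs_R0 in H3, H4.
    destruct (M0_sq1u i r s Hi Hr Hs) as [K1 K2].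
    simpl in *. unfold SC in *. rewrite dC_cl in *.
    assert (L1 : D (usq 0 (M0S i r)) (usq 0 (M0S i s)) <= Rabs (s - r)).
    { eapply Rle_trans. apply (D_lvl _ _ 0); apply sq_coh. simpl. try rewrite !sq_k. exact K1. }
    assert (L2 : D (usq 0 (M0S r i)) (usq 0 (M0S s i)) <= Rabs (s - r)).
    { eapply Rle_trans. apply (D_lvl _ _ 0); apply sq_coh. simpl. try rewrite !sq_k. exact K2. }
    rewrite Rabs_minus_sym in H3, H4. rewrite ?dC_cl. split; lra.
  - apply C_sq2.
Qed.

Definition shift (m : Pt P) (f : Seq) : Seq := fun n =>
  match n return car (Ch P n) with
  | O => Smap (Ch P 0) 0 0
  | S n' => ((m, f n') : car (Ch P (S n')))
  end.

Lemma shift_coh m f k : coh f k -> coh (shift m f) (S k).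
Proof. intros H n Hn. destruct n as [|n]; [lia|]. simpl. rewrite H by lia. reflexivity. Qed.

Definition ushift (m : Pt P) (f : U) : U :=
  exist _ (shift m (proj1_sig f))
    (let (k, Hk) := proj2_sig f in ex_intro _ (S k) (shift_coh m _ k Hk)).

Lemma ushift_coh m (f : U) n : coh (proj1_sig f) n -> coh (proj1_sig (ushift m f)) (S n).
Proof. intros H. apply shift_coh; auto. Qed.

Lemma D_shift m f g : D (ushift m f) (ushift m g) <= D f g / 3.
Proof.
  assert (3 * D (ushift m f) (ushift m g) <= D f g); [|lra].
  apply D_ge. intros c (n & H1 & H2 & ->).
  pose proof (D_lvl (ushift m f) (ushift m g) (S n) (ushift_coh _ _ _ H1) (ushift_coh _ _ _ H2)).
  simpl in H. pose proof (tdist_cell P (Ch P n) (stage_pmet n)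
     (m, proj1_sig f n) (m, proj1_sig g n) eq_refl). simpl in H0. lra.
Qed.

Lemma D_shift0 m f g : D f g = 0 -> D (ushift m f) (ushift m g) = 0.
Proof. intros H. pose proof (D_shift m f g). pose proof (D_nonneg (ushift m f) (ushift m g)). lra. Qed.

Definition aC (u : car (tensor P C)) : car C := cl (ushift (fst u) (rep (snd u))).

Lemma D0_tri f g h : D f g = 0 -> D g h = 0 -> D f h = 0.
Proof. intros. pose proof (D_tri f g h). pose proof (D_nonneg f h). lra. Qed.

Lemma shift_usq0_gen m n p1 p2 q1 q2 : inM0 p1 p2 -> inM0 q1 q2 ->
  gen P (Ch P 0) ((m, M0S p1 p2) : Tcar P (Ch P 0)) (n, M0S q1 q2) ->
  D (ushift m (usq 0 (M0S p1 p2))) (ushift n (usq 0 (M0S q1 q2))) = 0.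
Proof.
  intros Hp Hq Hg. apply Rle_antisym; [|apply D_nonneg].
  eapply Rle_trans. apply (D_lvl _ _ 1); apply ushift_coh; apply sq_coh.
  simpl. rewrite tdist_gen; auto. lra. apply M0_pmet.
Qed.

Lemma aC_gen u v : gen P C u v -> aC u = aC v.
Proof.
  intros (p1 & p2 & q1 & q2 & Hp & Hq & Hu & Hv & Hadj & G1 & G2).
  unfold aC. apply cl_eq. rewrite Hu, Hv. simpl Smap. unfold SC.
  apply (D0_tri _ (ushift (fst u) (usq 0 (M0S p1 p2)))).
  { apply D_shift0. apply rep_cl. }
  apply (D0_tri _ (ushift (fst v) (usq 0 (M0S q1 q2)))).
  { apply shift_usq0_gen; auto. exists p1, p2, q1, q2. simpl. repeat (split; auto). }
  rewrite D_sym. apply D_shift0. apply rep_cl.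
Qed.

Lemma C_pmet : pmet C.
Proof. apply squams_pmet, C_squams. Qed.

Lemma aC_step u v c : step P C u v c -> dC (aC u) (aC v) <= c.
Proof.
  intros H. destruct H as [->|[-> [Hg|Hg]]].
    + destruct (dpre_cases P C u v) as [[E1 ->]|[E1 ->]].
      * destruct u as [m e], v as [m' e']. simpl in E1. assert (m = m') by (apply sig_ext; auto). subst m'.
        unfold aC; simpl. rewrite dC_cl. apply D_shift.
      * unfold aC. rewrite dC_cl. apply D_le2.
    + rewrite (aC_gen _ _ Hg). unfold dC. rewrite D_self. lra.
    + rewrite (aC_gen _ _ Hg). unfold dC. rewrite D_self. lra.
Qed.

Lemma aC_chain u v c : chainsum P C u v c -> dC (aC u) (aC v) <= c.
Proof.
  induction 1.
  - apply aC_step; auto.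
  - pose proof (aC_step _ _ _ H). pose proof (D_tri (rep (aC u)) (rep (aC w)) (rep (aC v))).
    unfold dC in *. lra.
Qed.

Lemma aC_hom : is_hom (tensor P C) C aC.
Proof.
  split.
  - intros u v. simpl. apply tdist_ge. apply C_pmet. apply aC_chain.
  - intros r s H. simpl. unfold aC, tS. simpl. unfold SC at 1. apply cl_eq.
    apply (D0_tri _ (ushift (mkPt P (cidx r, cidx s)) (usq 0 (M0S (3 * r - INR (cidx r)) (3 * s - INR (cidx s)))))).
    { apply D_shift0. apply rep_cl. }
    apply Rle_antisym; [|apply D_nonneg].
    eapply Rle_trans. apply (D_lvl _ _ 1). apply ushift_coh, sq_coh. apply coh_mono with 0%nat; [apply sq_coh|lia].
    simpl proj1_sig. replace (sq 0 (M0S r s) 1) with (Smap (Ch P 1) r s) by (symmetry; apply sq_M0; auto).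
    simpl. destruct (tensor_pmet P M0obj M0_pmet) as [_ [Z _]]. unfold bang. rewrite M0S_val by auto. simpl. pose proof (Z (tS P M0obj r s)) as Z1. unfold tS in Z1; simpl in Z1. right. exact Z1.
Qed.

Definition gC (k : nat) (x : car (Ch P k)) : car C := cl (usq k x).

Lemma gC_cocone : cocone P C gC.
Proof.
  split.
  - intros k. split.
    + intros x y. simpl. unfold gC. rewrite dC_cl. eapply Rle_trans.
      apply (D_lvl _ _ k); apply sq_coh. simpl. rewrite !sq_k. lra.
    + intros r s H. simpl. unfold gC, SC. apply cl_eq. apply Rle_antisym; [|apply D_nonneg].
      eapply Rle_trans. apply (D_lvl _ _ k). apply sq_coh. apply coh_mono with 0%nat; [apply sq_coh|lia].
      simpl. rewrite sq_k, sq_M0 by auto. destruct (stage_pmet k) as [_ [Z _]]. rewrite Z. lra.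
  - intros k x. unfold gC. apply cl_eq. apply Rle_antisym; [|apply D_nonneg].
    eapply Rle_trans. apply (D_lvl _ _ (S k)). apply sq_coh. apply coh_mono with k; [apply sq_coh|lia].
    unfold usq; cbn [proj1_sig]. rewrite sq_k, sq_S, sq_k by lia. destruct (stage_pmet (S k)) as [_ [Z _]]. rewrite Z. lra.
Qed.

Lemma cl_canon (E : Qc) : exists k x, E = gC k x.
Proof.
  rewrite <- (cl_rep E). destruct (rep E) as [f [k Hk]] eqn:Ef.
  exists k, (f k). unfold gC. apply cl_eq. apply Rle_antisym; [|apply D_nonneg].
  eapply Rle_trans. apply (D_lvl _ _ k); [exact Hk|apply sq_coh].
  simpl. rewrite sq_k. destruct (stage_pmet k) as [_ [Z _]]. rewrite Z. lra.
Qed.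

Section Univ.
Variables (B : PreSq) (HB : is_squams B) (h : forall k, car (Ch P k) -> car B) (Hh : cocone P B h).

Definition val (f : U) : car B :=
  h (proj1_sig (constructive_indefinite_description _ (proj2_sig f)))
    (proj1_sig f (proj1_sig (constructive_indefinite_description _ (proj2_sig f)))).

Lemma h_stable (f : Seq) k : coh f k -> forall j, h (j + k)%nat (f (j + k)%nat) = h k (f k).
Proof. intros Hk j. induction j; [reflexivity|]. simpl. rewrite Hk by lia.
  destruct Hh as [_ Hc]. rewrite Hc. auto. Qed.

Lemma h_stable' (f : Seq) k n : coh f k -> (k <= n)%nat -> h n (f n) = h k (f k).
Proof. intros Hk Hn. destruct (Nat.le_exists_sub k n Hn) as [j [-> _]]. apply h_stable; auto. Qed.

Lemma val_any (f : U) n : coh (proj1_sig f) n -> val f = h n (proj1_sig f n).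
Proof. intros Hn. unfold val. destruct (constructive_indefinite_description _ _) as [k Hk]. simpl.
  rewrite <- (h_stable' _ k (max k n)) by (auto; lia).
  rewrite <- (h_stable' _ n (max k n)) by (auto; lia). auto. Qed.

Lemma val_short f g : dist B (val f) (val g) <= D f g.
Proof. apply D_ge. intros c (n & H1 & H2 & ->). rewrite (val_any f n), (val_any g n) by auto.
  destruct Hh as [Hm _]. apply (Hm n). Qed.

Lemma val_D0 f g : D f g = 0 -> val f = val g.
Proof. intros H. pose proof (val_short f g). destruct HB as [[N [_ [Def _]]] _].
  apply Def. specialize (N (val f) (val g)). lra. Qed.

Definition uB (E : car C) : car B := val (rep E).

Lemma uB_cl f : uB (cl f) = val f.
Proof. apply val_D0. apply rep_cl. Qed.

Lemma uB_g k x : uB (gC k x) = h k x.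
Proof. unfold gC. rewrite uB_cl. rewrite (val_any _ k) by apply sq_coh. simpl. rewrite sq_k. auto. Qed.

Lemma uB_hom : is_hom C B uB.
Proof.
  split.
  - intros E E'. simpl. apply val_short.
  - intros r s H. simpl. unfold SC. rewrite uB_cl. rewrite (val_any _ 0) by apply sq_coh.
    simpl. destruct Hh as [Hm _]. destruct (Hm 0%nat) as [_ HS]. apply (HS r s H).
Qed.

Lemma uB_unique u' : is_hom C B u' -> (forall k x, u' (gC k x) = h k x) -> forall y, u' y = uB y.
Proof. intros _ Hu y. destruct (cl_canon y) as (k & x & ->). rewrite Hu, uB_g. auto. Qed.
End Univ.

Lemma C_colimit : is_colimit P C gC.
Proof.
  split; [apply C_squams|split; [apply gC_cocone|]].
  intros B h HB Hh. exists (uB B h). split; [apply uB_hom; auto|split].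
  - intros k x. apply uB_g; auto.
  - intros u' Hu' Hg y. apply uB_unique; auto.
Qed.

Section Init.
Variables (B : PreSq) (b : car (tensor P B) -> car B) (Hb : is_alg P B b).

Fixpoint hB (k : nat) : car (Ch P k) -> car B :=
  match k return car (Ch P k) -> car B with
  | O => fun x => Smap B (fst (proj1_sig x)) (snd (proj1_sig x))
  | S k' => fun u => b (tmap P (Ch P k') B (hB k') u)
  end.

Lemma hB_hom k : is_hom (Ch P k) B (hB k).
Proof.
  destruct Hb as [HBs [Hbs HbS]].
  induction k as [|k [IH1 IH2]].
  - split.
    + intros [[r s] Hx] [[t u] Hy]. simpl. apply path_short; auto.
      apply squams_pmet; auto. apply squams_sq1u; auto.
    + intros r s H. simpl. rewrite M0S_val; auto.
  - split.
    + intros x y. simpl. eapply Rle_trans. apply Hbs.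
      apply tmap_short; auto. apply stage_pmet. apply squams_pmet; auto.
    + intros r s H. simpl. rewrite tS_tmap; auto.
  apply HbS; auto.
Qed.

Lemma hB_compat k x : hB (S k) (cmap P k x) = hB k x.
Proof.
  destruct Hb as [HBs [Hbs HbS]].
  revert x. induction k; intros x.
  - destruct x as [[r s] H]. simpl. unfold bang. simpl. rewrite tS_tmap; [apply HbS; auto| apply (proj2 (hB_hom 0)) | auto].
  - destruct x as [m y]. change (b (tmap P (Ch P (S k)) B (hB (S k)) (tmap P (Ch P k) (Ch P (S k)) (cmap P k) (m,y))) = b (tmap P (Ch P k) B (hB k) (m, y))). unfold tmap; cbn [fst snd]. rewrite IHk. reflexivity.
Qed.

Lemma hB_cocone : cocone P B hB.
Proof. split. apply hB_hom. apply hB_compat. Qed.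

Lemma gC_S m k y : gC (S k) ((m, y) : car (Ch P (S k))) = aC (m, gC k y).
Proof.
  unfold aC, gC. simpl. apply cl_eq.
  apply (D0_tri _ (ushift m (usq k y))).
  - apply Rle_antisym; [|apply D_nonneg].
    eapply Rle_trans. apply (D_lvl _ _ (S k)). apply sq_coh. apply ushift_coh, sq_coh.
    unfold usq, ushift; cbn [proj1_sig]. rewrite sq_k. unfold shift. rewrite sq_k. destruct (stage_pmet (S k)) as [_ [Z _]]. right. apply Z.
  - rewrite D_sym. apply D_shift0. apply rep_cl.
Qed.

Lemma C_initial_part : exists h0, alg_hom P C aC B b h0 /\
      forall h', alg_hom P C aC B b h' -> forall x, h' x = h0 x.
Proof.
  destruct Hb as [HBs [Hbs HbS]].
  exists (uB B hB). split; [split|].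
  - apply uB_hom; auto. apply hB_cocone.
  - intros [m e]. unfold aC. simpl. rewrite uB_cl; auto; [|apply hB_cocone].
    destruct (proj2_sig (rep e)) as [k Hk] eqn:Ek.
    rewrite (val_any B hB hB_cocone _ (S k)) by (apply ushift_coh; auto).
    simpl. unfold tmap; simpl. f_equal. f_equal.
    unfold uB. rewrite (val_any B hB hB_cocone _ k) by auto. reflexivity.
  - intros h' [Hh' Hc]. 
    assert (K : forall k x, h' (gC k x) = hB k x).
    { induction k; intros x.
      - destruct x as [[r s] H]. unfold gC.
        assert (E : usq 0 (exist (fun p : R * R => inM0 (fst p) (snd p)) (r, s) H) = usq 0 (M0S r s)).
        { rewrite <- (M0S_eq (exist _ (r, s) H)). reflexivity. }
        rewrite E. fold (SC r s). destruct Hh' as [_ HS]. apply (HS r s H).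
      - destruct x as [m y]. rewrite gC_S. rewrite Hc. unfold tmap; simpl. rewrite IHk. reflexivity. }
    intros y. apply uB_unique; auto. apply hB_cocone.
Qed.
End Init.

Lemma C_initial : initial_alg P C aC.
Proof.
  split. split. apply C_squams. apply aC_hom.
  intros B b Hb. apply C_initial_part; auto.
Qed.

End Col.

Theorem mainTheorem3 :
  forall P : Shape, P = shapeM \/ P = shapeN ->
  exists (A : PreSq) (a : car (tensor P A) -> car A)
         (g : forall k, car (Ch P k) -> car A),
    initial_alg P A a /\ is_colimit P A g.
Proof.
  intros P HP. assert (G : goodP P) by (destruct HP; subst; [apply goodM|apply goodN]).
  exists (C P), (aC P), (gC P). split. apply C_initial; auto. apply C_colimit; auto.
Qed.
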